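(* In the setting below, assume $\mathbb{P}(X=x)=0$ and $\mathbb{E}[\mathbb{I}_{\bar B_r}(X)|\eta(X)-\eta(x)|]>0$ for all $r>0$. Let $(r_m)_{m\ge m_1}$ be the $\alpha$-sequence at $x$ for some $\alpha\in(0,1)$, and suppose $x$ is a Lebesgue point for $\eta$ with respect to $\mathbb{P}_X$. Then the following are equivalent: (i) $\mathbb{E}[|\eta(X^x_m)-\eta(x)|]\to 0$ as $m\to\infty$; (ii) $\mathbb{E}[\mathbb{I}_{S_{r_m}}(X^x_m)|\eta(X^x_m)-\eta(x)|]\to 0$ as $m\to\infty$.
   Context: Let $(\mathcal{X},d)$ be a metric space with its Borel $\sigma$-algebra, let $(\Omega,\mathcal{F},\mathbb{P})$ be a probability space, and let $X,X_1,X_2,\dots$ be i.i.d. $\mathcal{X}$-valued random variables with common law $\mathbb{P}_X$. For $x\in\mathcal{X}$ and $r>0$ write $B_r=\{x':d(x,x')<r\}$, $\bar B_r=\{x':d(x,x')\le r\}$ and $S_r=\{x':d(x,x')=r\}$. The support of $\mathbb{P}_X$ is the set of $x$ such that $\mathbb{P}_X(\bar B_r(x))>0$ for all $r>0$. Fix $x$ in the support of $\mathbb{P}_X$ and a bounded measurable $\eta:\mathcal{X}\to\mathbb{R}$. For each $m\in\mathbb{N}$, a nearest neighbor of $x$ among $X_1,\dots,X_m$ is a measurable $X^x_m:\Omega\to\mathcal{X}$ with $X^x_m(\omega)\in\arg\min_{x'\in\{X_1(\omega),\dots,X_m(\omega)\}}d(x,x')$ for every $\omega\in\Omega$; fix such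 a sequence $(X^x_m)_{m\in\mathbb{N}}$. The point $x$ is a Lebesgue point if $\mathbb{E}[\mathbb{I}_{\bar B_r}(X)\,|\eta(X)-\eta(x)|]/\mathbb{P}_X(\bar B_r)\to 0$ as $r\to 0^+$. For $\alpha\in(0,1)$ and $r>0$ define $M_\alpha(r)=\big(\mathbb{E}[\mathbb{I}_{\bar B_r}(X)|\eta(X)-\eta(x)|]\big)^{\alpha}\big(\mathbb{P}_X(\bar B_r)\big)^{1-\alpha}$; let $m_1=\lceil 1/M_\alpha(1)\rceil$ and for integers $m\ge m_1$ let $r_m=\sup\{r>0:M_\alpha(r)<1/m\}$. The sequence $(r_m)_{m\ge m_1}$ is the $\alpha$-sequence at $x$. *)

(* Defs.v *)
From HB Require Import structures.
From mathcomp Require Import all_boot all_order all_algebra.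
From mathcomp Require Import all_classical all_reals all_analysis.
Set Implicit Arguments. Unset Strict Implicit. Unset Printing Implicit Defensive.
Import Order.TTheory GRing.Theory Num.Theory.
Import numFieldNormedType.Exports.
Local Open Scope classical_set_scope.
Local Open Scope ring_scope.

Section Defs.
Context {R : realType} {d : measure_display} {T : measurableType d}.
Context {dO : measure_display} {Omega : measurableType dO}.

Definition is_metric (dist : T -> T -> R) : Prop :=
  [/\ forall x y, dist x y = 0 <-> x = y,
      forall x y, dist x y = dist y x &
      forall x y z, dist x z <= dist x y + dist y z].

Definition metric_open (dist : T -> T -> R) (A : set T) : Prop :=
  forall y, A y -> exists2 e : R, 0 < e & [set z | dist y z < e] `<=` A.

Definition cball (dist : T -> T -> R) (x : T) (r : R) : set T :=
  [set y | dist x y <= r].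
Definition sphere (dist : T -> T -> R) (x : T) (r : R) : set T :=
  [set y | dist x y = r].

(* X_0 = X, X_1, X_2, ... i.i.d.: identically distributed and mutually
   independent (product rule over every finite initial segment, which with
   B i = setT covers every finite subfamily). *)
Definition iid_seq (P : probability Omega R) (Xs : nat -> Omega -> T) : Prop :=
  (forall i, measurable_fun setT (Xs i)) /\
  (forall i (A : set T), measurable A -> P (Xs i @^-1` A) = P (Xs 0 @^-1` A)) /\
  (forall (n : nat) (B : nat -> set T), (forall i, measurable (B i)) ->
     P (\bigcap_(i in `I_n) (Xs i @^-1` B i)) = (\prod_(i < n) P (Xs i @^-1` B i))%E).

Definition nearest_neighbors (dist : T -> T -> R) (x : T)
    (Xs : nat -> Omega -> T) (XN : nat -> Omega -> T) : Prop :=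
  (forall m, measurable_fun setT (XN m)) /\
  (forall m w, (1 <= m)%N ->
     (exists2 i, (1 <= i <= m)%N & XN m w = Xs i w) /\
     (forall j, (1 <= j <= m)%N -> dist x (XN m w) <= dist x (Xs j w))).

Definition locE (P : probability Omega R) (dist : T -> T -> R) (X : Omega -> T)
    (eta : T -> R) (x : T) (r : R) : \bar R :=
  (\int[P]_w ((\1_(cball dist x r) (X w)) * `|eta (X w) - eta x|)%:E)%E.

Definition PXball (P : probability Omega R) (dist : T -> T -> R) (X : Omega -> T)
    (x : T) (r : R) : \bar R := P (X @^-1` cball dist x r).

Definition lebesgue_point (P : probability Omega R) (dist : T -> T -> R)
    (X : Omega -> T) (eta : T -> R) (x : T) : Prop :=
  (fun r => fine (locE P dist X eta x r) / fine (PXball P dist X x r)) @ 0^'+ --> 0.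

Definition Malpha (P : probability Omega R) (dist : T -> T -> R) (X : Omega -> T)
    (eta : T -> R) (x : T) (alpha r : R) : R :=
  (fine (locE P dist X eta x r)) `^ alpha * (fine (PXball P dist X x r)) `^ (1 - alpha).

Definition alpha_m1 (P : probability Omega R) (dist : T -> T -> R) (X : Omega -> T)
    (eta : T -> R) (x : T) (alpha : R) : nat :=
  `|Num.ceil (Malpha P dist X eta x alpha 1)^-1|%N.

(* r_m = sup {r > 0 | M_alpha(r) < 1/m}  (meaningful for m >= m_1) *)
Definition alpha_seq (P : probability Omega R) (dist : T -> T -> R) (X : Omega -> T)
    (eta : T -> R) (x : T) (alpha : R) (m : nat) : R :=
  sup [set r : R | 0 < r /\ Malpha P dist X eta x alpha r < m%:R^-1].

End Defs.

(* Main.v *)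
Require Import Defs.
From HB Require Import structures.
From mathcomp Require Import all_boot all_order all_algebra.
From mathcomp Require Import all_classical all_reals all_analysis measurable_realfun.
From mathcomp Require Import lra.
Import Order.TTheory GRing.Theory Num.Theory.
Import numFieldNormedType.Exports.
Local Open Scope classical_set_scope.
Local Open Scope ring_scope.
Lemma pick_de (R : realType) (a K eps : R) : 0 < a < 1 -> 0 <= K -> 0 < eps ->
  exists2 de : R, 0 < de & de `^ (1 - a) + K * de `^ a <= eps.
Proof.
move=> /andP[a0 a1] K0 e0.
set q := eps / (1 + K).
have q0 : 0 < q by rewrite divr_gt0 //; lra.
have b0 : 0 < 1 - a by lra.
have pw (b : R) : 0 < b -> (q `^ b^-1) `^ b = q.
  by move=> hb; rewrite -powRrM mulVf ?gt_eqF // powRr1 // ltW.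
set de := Order.min (q `^ (1 - a)^-1) (q `^ a^-1).
have de0 : 0 < de by rewrite lt_min !powR_gt0.
exists de => //.
have h1 : de `^ (1 - a) <= q.
  rewrite -[X in _ <= X](pw _ b0); apply: ge0_ler_powR; rewrite ?nnegrE ?(ltW b0) ?(ltW de0) ?powR_ge0 //.
  by rewrite ge_min lexx.
have h2 : de `^ a <= q.
  rewrite -[X in _ <= X](pw _ a0); apply: ge0_ler_powR; rewrite ?nnegrE ?(ltW a0) ?(ltW de0) ?powR_ge0 //.
  by rewrite ge_min lexx orbT.
have : q * (1 + K) = eps by rewrite /q -mulrA mulVf ?mulr1 // gt_eqF //; lra.
have h3 : K * de `^ a <= K * q by exact: ler_wpM2l.
nra.
Qed.

Section Integ.
Context (R : realType) (d : measure_display) (T : measurableType d)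
  (dO : measure_display) (Omega : measurableType dO) (P : probability Omega R).

Lemma int_pushT (Y : Omega -> T) (mY : measurable_fun setT Y) (h : T -> R)
  (mh : measurable_fun setT h) (h0 : forall y, 0 <= h y) :
  (\int[P]_w (h (Y w))%:E)%E = (\int[pushforward P Y]_y (h y)%:E)%E.
Proof.
rewrite ge0_integral_pushforward //.
- exact/measurable_EFinP.
- by move=> y _; rewrite lee_fin.
Qed.

Lemma int_ident (Y Z : Omega -> T) (mY : measurable_fun setT Y)
  (mZ : measurable_fun setT Z)
  (hYZ : forall A, measurable A -> P (Y @^-1` A) = P (Z @^-1` A))
  (h : T -> R) (mh : measurable_fun setT h) (h0 : forall y, 0 <= h y) :
  (\int[P]_w (h (Y w))%:E)%E = (\int[P]_w (h (Z w))%:E)%E.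
Proof.
rewrite (int_pushT _ mY) // (int_pushT _ mZ) //.
apply: eq_measure_integral => A mA _.
rewrite /pushforward /=.
exact: hYZ.
Qed.
End Integ.
Section Metric.
Context (R : realType) (d : measure_display) (T : measurableType d)
  (dist : T -> T -> R).

Lemma dist_ge0 (hd : is_metric dist) y z : 0 <= dist y z.
Proof.
case: hd => h0 hs ht.
have := ht y z y; rewrite (hs z y) (proj2 (h0 y y) erefl).
by move=> H; rewrite -(pmulr_rge0 _ (ltr0n R 2)) mulr_natl mulr2n.
Qed.

Lemma gt_dist_meas (hd : is_metric dist)
  (hm : @measurable _ T = <<s metric_open dist >>) x r :
  measurable [set y | r < dist x y].
Proof.
rewrite hm; apply: sub_gen_smallest => y /= ry.
exists (dist x y - r); first by rewrite subr_gt0.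
move=> z /= hz; case: hd => _ hs ht.
have := ht x z y; rewrite (hs z y) => H.
lra.
Qed.

Lemma lt_dist_meas (hd : is_metric dist)
  (hm : @measurable _ T = <<s metric_open dist >>) x r :
  measurable [set y | dist x y < r].
Proof.
rewrite hm; apply: sub_gen_smallest => y /= ry.
exists (r - dist x y); first by rewrite subr_gt0.
move=> z /= hz; case: hd => _ hs ht.
have := ht x y z => H; lra.
Qed.

Lemma cball_meas (hd : is_metric dist)
  (hm : @measurable _ T = <<s metric_open dist >>) x r :
  measurable (cball dist x r).
Proof.
have -> : cball dist x r = ~` [set y | r < dist x y].
  apply/seteqP; split => y /=; rewrite /cball /=.
    by move=> h; apply/negP; rewrite -leNgt.
  by move=> /negP; rewrite -leNgt.
exact/measurableC/gt_dist_meas.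
Qed.

Lemma sphere_meas (hd : is_metric dist)
  (hm : @measurable _ T = <<s metric_open dist >>) x r :
  measurable (sphere dist x r).
Proof.
have -> : sphere dist x r = cball dist x r `&` ~` [set y | dist x y < r].
  apply/seteqP; split => y /=; rewrite /sphere /cball /=.
    by move=> ->; rewrite ltxx.
  move=> [h1 h2]; apply/eqP; rewrite eq_le h1 /=; rewrite leNgt; exact/negP.
apply: measurableI; first exact: cball_meas.
exact/measurableC/lt_dist_meas.
Qed.
End Metric.

Lemma int_bnd (R : realType) (dO : measure_display) (Omega : measurableType dO)
  (P : probability Omega R) (f : Omega -> R) (mf : measurable_fun setT f)
  (K : R) (f0 : forall w, 0 <= f w) (fK : forall w, f w <= K) :
  (0 <= \int[P]_w (f w)%:E <= K%:E)%E.
Proof.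
apply/andP; split; first by apply: integral_ge0 => w _; rewrite lee_fin.
apply: (@le_trans _ _ (\int[P]_w (cst K%:E w))%E).
  apply: ge0_le_integral => //.
  - by move=> w _; rewrite lee_fin.
  - exact/measurable_EFinP.
  - by move=> w _; rewrite lee_fin.
rewrite integral_cst //.
have E1 : (P : measure Omega R) setT = 1%E := probability_setT P.
rewrite E1.
by rewrite mule1.
Qed.

Lemma int_fin (R : realType) (dO : measure_display) (Omega : measurableType dO)
  (P : probability Omega R) (f : Omega -> R) (mf : measurable_fun setT f)
  (K : R) (f0 : forall w, 0 <= f w) (fK : forall w, f w <= K) :
  (\int[P]_w (f w)%:E)%E = (fine (\int[P]_w (f w)%:E))%:E.
Proof.
have /andP[h1 h2] := @int_bnd _ _ _ P _ mf _ f0 fK.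
rewrite fineK // ge0_fin_numE //; exact: le_lt_trans h2 (ltry _).
Qed.

Lemma mpre (d1 d2 : measure_display) (T1 : measurableType d1) (T2 : measurableType d2)
  (f : T1 -> T2) (mf : measurable_fun setT f) (A : set T2) :
  measurable A -> measurable (f @^-1` A).
Proof. by move=> mA; have := mf measurableT A mA; rewrite setTI. Qed.

Section Main.
Context (R : realType) (d : measure_display) (T : measurableType d)
  (dist : T -> T -> R)
  (dO : measure_display) (Omega : measurableType dO) (P : probability Omega R)
  (Xs : nat -> Omega -> T) (XN : nat -> Omega -> T)
  (eta : T -> R) (x : T) (alpha : R).
Context (hd : is_metric dist) (hm : @measurable _ T = <<s metric_open dist >>)
  (hiid : iid_seq P Xs) (hnn : nearest_neighbors dist x Xs XN)
  (meta : measurable_fun setT eta) (K : R) (hK : forall y, `|eta y - eta x| <= K)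
  (hp : forall r : R, 0 < r -> (0%:E < PXball P dist (Xs 0%N) x r)%E)
  (he : forall r : R, 0 < r -> (0%:E < locE P dist (Xs 0%N) eta x r)%E)
  (ha : 0 < alpha < 1).

Local Notation X := (Xs 0%N).
Definition g y := `|eta y - eta x|.
Definition ee r := fine (locE P dist X eta x r).
Definition pp r := fine (PXball P dist X x r).
Definition MM r := Malpha P dist X eta x alpha r.

Lemma MME r : MM r = ee r `^ alpha * pp r `^ (1 - alpha).
Proof. by []. Qed.

Lemma mX i : measurable_fun setT (Xs i).
Proof. by case: hiid. Qed.

Lemma mg : measurable_fun setT g.
Proof.
apply: measurableT_comp => //; apply: measurable_funB => //.
Qed.

Lemma g_ge0 y : 0 <= g y. Proof. exact: normr_ge0. Qed.

Lemma ind01g (U : Type) (A : set U) y : 0 <= (\1_A y : R) <= 1.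
Proof. rewrite indicE; case: (y \in A) => /=; apply/andP; split; rewrite ?ler01 ?lexx //. Qed.

Lemma ind01 (A : set T) y : 0 <= (\1_A y : R) <= 1.
Proof. rewrite indicE; case: (y \in A) => /=; apply/andP; split; rewrite ?ler01 ?lexx //. Qed.

Lemma mgi (A : set T) : measurable A -> measurable_fun setT (fun y => \1_A y * g y).
Proof. by move=> mA; apply: measurable_funM; [exact: measurable_indic|exact: mg]. Qed.

Lemma gi_ge0 (A : set T) y : 0 <= \1_A y * g y.
Proof. by have /andP[h _] := ind01 A y; rewrite mulr_ge0 // g_ge0. Qed.

Lemma gi_leK (A : set T) y : \1_A y * g y <= K.
Proof.
have /andP[h1 h2] := ind01 A y.
apply: le_trans (hK y); rewrite /g -[X in _ <= X]mul1r.
by apply: ler_wpM2r => //; exact: normr_ge0.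
Qed.

Lemma mgiY (A : set T) (Y : Omega -> T) : measurable A -> measurable_fun setT Y ->
  measurable_fun setT (fun w => \1_A (Y w) * g (Y w)).
Proof. by move=> mA mY; have := measurableT_comp (mgi _ mA) mY. Qed.

Lemma mXpre i A : measurable A -> measurable (Xs i @^-1` A).
Proof. by move=> mA; apply: mpre => //; exact: mX. Qed.

Lemma mgiX i r : measurable_fun setT (fun w => \1_(cball dist x r) (Xs i w) * g (Xs i w)).
Proof. by apply: mgiY; [exact: cball_meas | exact: mX]. Qed.

Lemma mgiXE i r : measurable_fun setT
  (fun w => (\1_(cball dist x r) (Xs i w) * g (Xs i w))%:E).
Proof. exact/measurable_EFinP/mgiX. Qed.

Lemma locE_E r : locE P dist X eta x r = (ee r)%:E.
Proof.
rewrite /ee /locE; apply: (@int_fin _ _ _ P _ _ K).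
- exact: mgiX.
- by move=> w; exact: gi_ge0.
- by move=> w; exact: gi_leK.
Qed.

Lemma ee_ge0 r : 0 <= ee r.
Proof.
rewrite /ee /locE; apply: fine_ge0; apply: integral_ge0 => w _.
by rewrite lee_fin gi_ge0.
Qed.

Lemma PX_E r : PXball P dist X x r = (pp r)%:E.
Proof.
rewrite /pp /PXball fineK // ge0_fin_numE //.
apply: le_lt_trans (probability_le1 _ _) (ltry _).
exact/mXpre/cball_meas.
Qed.

Lemma pp_ge0 r : 0 <= pp r.
Proof. by rewrite /pp; apply: fine_ge0. Qed.

Lemma pp_le1 r : pp r <= 1.
Proof.
rewrite -lee_fin -PX_E /PXball; apply: probability_le1.
exact/mXpre/cball_meas.
Qed.

Lemma pp_gt0 r : 0 < r -> 0 < pp r.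
Proof. by move=> r0; rewrite -lte_fin -PX_E; exact: hp. Qed.

Lemma ee_gt0 r : 0 < r -> 0 < ee r.
Proof. by move=> r0; rewrite -lte_fin -locE_E; exact: he. Qed.

Lemma cball_sub r s : r <= s -> cball dist x r `<=` cball dist x s.
Proof. move=> rs y; rewrite /cball /= => h; exact: le_trans h rs. Qed.

Lemma ee_mono r s : r <= s -> ee r <= ee s.
Proof.
move=> rs; rewrite -lee_fin -!locE_E /locE.
apply: ge0_le_integral => //.
- exact: mgiXE.
- exact: mgiXE.
move=> w _; rewrite lee_fin; apply: ler_wpM2r; first exact: g_ge0.
rewrite !indicE; case: (boolP (X w \in cball dist x r)) => //=.
  by rewrite in_setE => /(@cball_sub r s rs); rewrite -in_setE => ->.
Qed.

Lemma pp_mono r s : r <= s -> pp r <= pp s.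
Proof.
move=> rs; rewrite -lee_fin -!PX_E /PXball.
apply: le_measure; rewrite ?inE; try exact/mXpre/cball_meas.
by move=> w /= h; exact: (@cball_sub r s rs _ h).
Qed.

Lemma MM_mono r s : r <= s -> MM r <= MM s.
Proof.
move=> rs; rewrite !MME; case/andP: ha => a0 a1.
apply: ler_pM; rewrite ?powR_ge0 //; apply: ge0_ler_powR;
  rewrite ?nnegrE ?ee_ge0 ?pp_ge0 ?ee_mono ?pp_mono //.
- exact: ltW.
- by rewrite subr_ge0 ltW.
Qed.

Lemma ee_nonpos r : r <= 0 -> ee r = 0.
Proof.
move=> r0; rewrite /ee /locE integral0_eq // => w _.
rewrite indicE; case: (boolP (X w \in _)) => [|_]; last by rewrite mul0r.
rewrite in_setE /cball /= => h.
have h0 : dist x (X w) = 0 by apply/eqP; rewrite eq_le (le_trans h r0) dist_ge0.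
case: hd => /(_ x (X w)) [/(_ h0) <- _] _ _.
by rewrite /g subrr normr0 mulr0.
Qed.


Lemma powR_split (y : R) : 0 < y -> y = y `^ alpha * y `^ (1 - alpha).
Proof.
move=> y0; rewrite -powRD; last by rewrite (gt_eqF y0) implybT.
by rewrite addrC subrK powRr1 // ltW.
Qed.

Lemma key_a t de : 0 < t -> 0 < de -> ee t <= de * pp t ->
  ee t <= de `^ (1 - alpha) * MM t.
Proof.
move=> t0 de0 h; case/andP: ha => a0 a1.
have e0 := ee_gt0 t t0; have p0 := pp_gt0 t t0.
rewrite {1}(powR_split _ e0) MME.
have h1 : ee t `^ (1 - alpha) <= de `^ (1 - alpha) * pp t `^ (1 - alpha).
  rewrite -powRM ?(ltW de0) ?pp_ge0 //; apply: ge0_ler_powR => //.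
  - by rewrite subr_ge0 ltW.
  - by rewrite nnegrE ltW.
  - by rewrite nnegrE mulr_ge0 // ltW.
rewrite mulrA [de `^ _ * _]mulrC -mulrA; apply: ler_wpM2l; first exact: powR_ge0.
exact: h1.
Qed.

Lemma key_b t de : 0 < t -> 0 < de -> ee t <= de * pp t ->
  MM t <= de `^ alpha * pp t.
Proof.
move=> t0 de0 h; case/andP: ha => a0 a1.
have e0 := ee_gt0 t t0; have p0 := pp_gt0 t t0.
rewrite MME {2}(powR_split _ p0) mulrA.
apply: ler_wpM2r; first exact: powR_ge0.
rewrite -powRM ?(ltW de0) ?pp_ge0 //; apply: ge0_ler_powR => //.
- exact: ltW.
- by rewrite nnegrE ltW.
- by rewrite nnegrE mulr_ge0 // ltW.
Qed.

Definition SS (m : nat) := [set r : R | 0 < r /\ MM r < m%:R^-1].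
Definition rr (m : nat) := alpha_seq P dist X eta x alpha m.
Lemma rrE m : rr m = sup (SS m). Proof. by []. Qed.

Lemma SS_empty m : ~ (SS m !=set0) -> rr m = 0.
Proof.
move=> em; rewrite rrE; have -> : SS m = set0; last exact: sup0.
by apply/seteqP; split => // u hu; exfalso; apply: em; exists u.
Qed.

Section Large.
Variables (rho : R) (m : nat).
Hypotheses (rho0 : 0 < rho) (hM : m%:R^-1 <= MM (rho / 2)).

Lemma S_lt u : SS m u -> u < rho / 2.
Proof.
move=> [u0 hu]; rewrite ltNge; apply/negP => h.
have := MM_mono _ _ h => h2.
have := lt_le_trans (le_lt_trans hM (le_lt_trans h2 hu)) (lexx _).
by rewrite ltxx.
Qed.

Lemma S_ub : ubound (SS m) (rho / 2).
Proof. by move=> u /S_lt /ltW. Qed.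

Lemma rr_ge0 : 0 <= rr m.
Proof.
have [[u hu]|em] := pselect (SS m !=set0); last by rewrite SS_empty.
rewrite rrE; apply: le_trans (ltW hu.1) _.
apply: sup_upper_bound; last exact: hu.
by split; [exists u | exists (rho / 2); exact: S_ub].
Qed.

Lemma rr_le : rr m <= rho / 2.
Proof.
have [ne|em] := pselect (SS m !=set0); last by rewrite SS_empty // divr_ge0 // ltW.
by rewrite rrE; apply: ge_sup => //; exact: S_ub.
Qed.

Lemma rr_above t : rr m < t -> m%:R^-1 <= MM t.
Proof.
move=> ht; rewrite leNgt; apply/negP => h.
have t0 : 0 < t by apply: le_lt_trans rr_ge0 ht.
have St : SS m t by [].
have : t <= rr m.
  rewrite rrE; apply: sup_upper_bound => //.
  by split; [exists t | exists (rho / 2); exact: S_ub].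
by rewrite leNgt ht.
Qed.

End Large.

Lemma rr_below m s : 0 < s -> s < rr m -> MM s < m%:R^-1.
Proof.
move=> s0 hs.
have [ne|em] := pselect (SS m !=set0); last first.
  by move: hs; rewrite SS_empty // => /(lt_trans s0); rewrite ltxx.
move: hs; rewrite rrE => /(sup_gt ne) [u [u0 hu] su].
exact: le_lt_trans (MM_mono _ _ (ltW su)) hu.
Qed.

Lemma ind_mono r s y : r <= s ->
  (\1_(cball dist x r) y : R) <= \1_(cball dist x s) y.
Proof.
move=> rs; rewrite !indicE; case: (boolP (y \in cball dist x r)) => /=.
  by rewrite in_setE => /(@cball_sub r s rs); rewrite -in_setE => ->.
by move=> _; case: (_ \in _).
Qed.

Lemma invS_mono (k l : nat) : (k <= l)%N -> (l.+1%:R^-1 : R) <= k.+1%:R^-1.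
Proof.
move=> kl; rewrite lef_pV2 ?posrE ?ltr0n // ler_nat ltnS //.
Qed.

Definition ballo r := [set y | dist x y < r].

Lemma int_open (Y : Omega -> T) (mY : measurable_fun setT Y) r c :
  (forall s, s < r -> (\int[P]_w (\1_(cball dist x s) (Y w) * g (Y w))%:E <= c%:E)%E) ->
  (\int[P]_w (\1_(ballo r) (Y w) * g (Y w))%:E <= c%:E)%E.
Proof.
move=> hs.
pose f := fun (k : nat) w => (\1_(cball dist x (r - k.+1%:R^-1)) (Y w) * g (Y w))%:E.
have mf k : measurable_fun setT (f k).
  by apply/measurable_EFinP; apply: mgiY => //; exact: cball_meas.
have f0 k w : setT w -> (0 <= f k w)%E by move=> _; rewrite lee_fin gi_ge0.
have fnd w : setT w -> {homo f^~ w : n m / (n <= m)%N >-> (n <= m)%E}.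
  move=> _ n m nm; rewrite /f lee_fin; apply: ler_wpM2r; first exact: g_ge0.
  by apply: ind_mono; rewrite lerD2l lerN2; exact: invS_mono.
have flim w : limn (f^~ w) = (\1_(ballo r) (Y w) * g (Y w))%:E.
  apply: lim_near_cst => //.
  have [lt|ge] := ltP (dist x (Y w)) r.
    have h : 0 < r - dist x (Y w) by rewrite subr_gt0.
    near=> k.
    have hk : k.+1%:R^-1 < r - dist x (Y w).
      by near: k; exact: (near_infty_natSinv_lt (PosNum h)).
    rewrite /f !indicE; congr ((_ : R) * _)%:E; congr (_%:R).
    have h1 : cball dist x (r - k.+1%:R^-1) (Y w).
      rewrite /cball /=; move: hk; set t := k.+1%:R^-1; lra.
    have h2 : ballo r (Y w) by [].
    by rewrite (mem_set h1) (mem_set h2).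
  apply: nearW => k; rewrite /f !indicE; congr ((_ : R) * _)%:E; congr (_%:R).
  have h1 : ~ cball dist x (r - k.+1%:R^-1) (Y w).
    rewrite /cball /=; have : 0 < k.+1%:R^-1 :> R by rewrite invr_gt0 ltr0n.
    move: ge; set t := k.+1%:R^-1; lra.
  have h2 : ~ ballo r (Y w) by rewrite /ballo /=; move: ge; lra.
  by rewrite (memNset h1) (memNset h2).
have <- : (\int[P]_w limn (f^~ w))%E = (\int[P]_w (\1_(ballo r) (Y w) * g (Y w))%:E)%E.
  by apply: eq_integral => w _; rewrite flim.
rewrite monotone_convergence //.
apply: lime_le.
  by apply/cvg_ex; eexists; apply: cvg_monotone_convergence.
near=> k; apply: hs; have : 0 < k.+1%:R^-1 :> R by rewrite invr_gt0 ltr0n.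
set t := k.+1%:R^-1; lra.
Unshelve. all: by end_near.
Qed.

Lemma P1 : (P : measure Omega R) setT = 1%E.
Proof. exact: probability_setT. Qed.

Lemma pow_bnd (q : R) (n : nat) : 0 <= q <= 1 -> (1 - q) ^+ n * (n%:R * q) <= 1.
Proof.
move=> /andP[q0 q1].
suff H : (1 - q) ^+ n * (1 + n%:R * q) <= 1.
  have a0 : 0 <= (1 - q) ^+ n by apply: exprn_ge0; lra.
  move: H a0; set a := (1 - q) ^+ n; set N := n%:R; nra.
elim: n => [|n IH]; first by rewrite expr0 mul0r addr0 mul1r.
rewrite exprS -mulrA.
have h1 : (1 - q) * (1 + n.+1%:R * q) <= 1 + n%:R * q.
  rewrite -natr1.
  have hn : 0 <= n%:R :> R by [].
  set N := n%:R; nra.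
have a0 : 0 <= (1 - q) ^+ n by apply: exprn_ge0; lra.
move: IH h1 a0; set a := (1 - q) ^+ n; set N := n%:R; rewrite -natr1 -/N => IH h1 a0.
nra.
Qed.

Lemma prob_far m t : (1 <= m)%N ->
  (P [set w | (t < dist x (XN m w))%R] <= ((1 - pp t) ^+ m)%:E)%E.
Proof.
move=> m1.
pose B := fun i : nat => if i == 0%N then setT else ~` cball dist x t.
have mB i : measurable (B i).
  by rewrite /B; case: (i == 0%N) => //; exact/measurableC/cball_meas.
have sub : [set w | t < dist x (XN m w)] `<=` \bigcap_(i in `I_m.+1) (Xs i @^-1` B i).
  move=> w /= hw i /= hi; rewrite /B; case: eqP => // /eqP i0.
  case: hnn => _ /(_ m w m1) [_ hmin].
  have : (1 <= i <= m)%N by rewrite lt0n i0 -ltnS.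
  move=> /hmin hi2; rewrite /cball /= => hc; lra.
apply: le_trans (le_measure _ _ _ sub) _.
- rewrite inE.
  have mXN : measurable_fun setT (XN m) by case: hnn.
  have := @mpre _ _ _ _ (XN m) mXN [set y | t < dist x y] (@gt_dist_meas _ _ _ dist hd hm x t).
  by [].
- rewrite inE; apply: bigcap_measurableType => i _; exact: mXpre.
case: hiid => _ [hid hprod].
have E' : (P : {content set Omega -> \bar R}) (\bigcap_(i in `I_m.+1) (Xs i @^-1` B i))
   = (\prod_(i < m.+1) P (Xs i @^-1` B i))%E := hprod m.+1 B mB.
rewrite E' big_ord_recl /= /B /= preimage_setT probability_setT mul1e.
have -> : (\prod_(i < m) P (Xs (lift ord0 i) @^-1` (if (bump 0 i == 0)%N then setT else ~` cball dist x t)))%E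
   = (\prod_(i < m) (1 - pp t)%:E)%E.
  apply: eq_bigr => i _ /=.
  rewrite hid; last exact/measurableC/cball_meas.
  rewrite -preimage_setC probability_setC; last exact/mXpre/cball_meas.
  by rewrite -/(PXball P dist X x t) PX_E.
by rewrite prodEFin prodr_const card_ord.
Qed.

Lemma K_ge0 : 0 <= K.
Proof. exact: le_trans (normr_ge0 _) (hK x). Qed.

Lemma pw m r w : (1 <= m)%N ->
  g (XN m w) <= \sum_(i < m) (\1_(ballo r) (Xs i.+1 w) * g (Xs i.+1 w))
    + \1_(sphere dist x r) (XN m w) * g (XN m w)
    + K * \1_(XN m @^-1` [set y | (r < dist x y)%R]) w.
Proof.
move=> m1.
have [[i0 /andP[hi1 hi2] E] _] := (proj2 hnn) m w m1.
have S0 : 0 <= \sum_(i < m) (\1_(ballo r) (Xs i.+1 w) * g (Xs i.+1 w)).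
  by apply: sumr_ge0 => i _; exact: gi_ge0.
have sp0 := gi_ge0 (sphere dist x r) (XN m w).
have fa0 : 0 <= K * \1_(XN m @^-1` [set y | (r < dist x y)%R]) w.
  by apply: mulr_ge0; [exact: K_ge0 | case/andP: (ind01 [set y | (r < dist x y)%R] (XN m w))].
case: (ltgtP (dist x (XN m w)) r) => h.
- have hj : (i0.-1 < m)%N by rewrite prednK // -ltnS ?ltnS // (leq_trans hi2).
  rewrite (bigD1 (Ordinal hj)) //= prednK //.
  have hb : ballo r (Xs i0 w) by rewrite /ballo /= -E.
  rewrite indicE (mem_set hb) mul1r -E.
  have R0 : 0 <= \sum_(i < m | i != Ordinal hj) (\1_(ballo r) (Xs i.+1 w) * g (Xs i.+1 w)).
    by apply: sumr_ge0 => i _; exact: gi_ge0.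
  lra.
- have hb : (XN m @^-1` [set y | (r < dist x y)%R]) w by [].
  rewrite [X in K * X]indicE (mem_set hb) mulr1.
  have := hK (XN m w); rewrite -/(g _); lra.
- have hb : sphere dist x r (XN m w) by [].
  rewrite [X in X * g _]indicE (mem_set hb) mul1r; lra.
Qed.

Section Bounds.
Variables (de rho : R) (m : nat).
Hypotheses (de0 : 0 < de) (rho0 : 0 < rho)
  (Hl : forall t, 0 < t < rho -> ee t <= de * pp t)
  (m1 : (1 <= m)%N) (hM : m%:R^-1 <= MM (rho / 2)).

Lemma far_t t : rr m < t -> t < rho ->
  (P [set w | (t < dist x (XN m w))%R] <= (de `^ alpha)%:E)%E.
Proof.
move=> rt trho.
have t0 : 0 < t by apply: le_lt_trans (@rr_ge0 rho m hM) rt.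
apply: le_trans (@prob_far m t m1) _; rewrite lee_fin.
have h1 := @rr_above rho m hM t rt.
have h2 := @key_b t de t0 de0 (Hl t (introT andP (conj t0 trho))).
have hm0 : 0 < m%:R :> R by rewrite ltr0n.
have h3 : 1 <= m%:R * pp t * de `^ alpha.
  have h := le_trans h1 h2.
  have hmi : m%:R * m%:R^-1 = 1 :> R by rewrite mulfV // gt_eqF.
  move: h hmi hm0; set im := m%:R^-1; set c := de `^ alpha; set M := m%:R; nra.
have h4 := @pow_bnd (pp t) m (introT andP (conj (pp_ge0 t) (pp_le1 t))).
have h5 : 0 <= (1 - pp t) ^+ m by apply: exprn_ge0; have := pp_le1 t; lra.
have h6 : 0 <= de `^ alpha by exact: powR_ge0.
move: h3 h4 h5 h6; set a := (1 - pp t) ^+ m; set b := m%:R * pp t; set c := de `^ alpha.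
rewrite -/b; nra.
Qed.

Lemma far_bound :
  (P [set w | (rr m < dist x (XN m w))%R] <= (de `^ alpha)%:E)%E.
Proof.
set r := rr m; set h := rho / 4.
have h0 : 0 < h by rewrite /h divr_gt0.
have rle : r <= rho / 2 := @rr_le rho m rho0 hM.
have rge : 0 <= r := @rr_ge0 rho m hM.
pose F := fun k : nat => [set w | (r + h * k.+1%:R^-1 < dist x (XN m w))%R].
have mXN : measurable_fun setT (XN m) by case: hnn.
have mF k : measurable (F k).
  exact: (@mpre _ _ _ _ (XN m) mXN _ (@gt_dist_meas _ _ _ dist hd hm x _)).
have mU : measurable [set w | (r < dist x (XN m w))%R].
  exact: (@mpre _ _ _ _ (XN m) mXN _ (@gt_dist_meas _ _ _ dist hd hm x _)).
have hinv k : 0 < k.+1%:R^-1 :> R by rewrite invr_gt0 ltr0n.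
have hinv1 k : k.+1%:R^-1 <= 1 :> R by rewrite invf_le1 ?ltr0n // ler1n.
have UE : \bigcup_k F k = [set w | (r < dist x (XN m w))%R].
  apply/seteqP; split => w /=.
    move=> [k _ /= hk]; move: hk; have := hinv k; have : 0 < h := h0.
    rewrite /F /=; set i := k.+1%:R^-1; set D := dist _ _; nra.
  move=> hw.
  have he0 : 0 < (dist x (XN m w) - r) / h by rewrite divr_gt0 // subr_gt0.
  have [N _ HN] := near_infty_natSinv_lt (PosNum he0).
  exists N => //=; have := HN N (leqnn N) => /=.
  rewrite ltr_pdivlMr // /F /= => hh; move: hh; set i := N.+1%:R^-1; set D := dist _ _; lra.
have Fnd : {homo F : n k / (n <= k)%N >-> (n <= k)%O}.
  move=> n k nk; rewrite subsetEset => w /=; apply: le_lt_trans.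
  rewrite lerD2l ler_pM2l //; exact: invS_mono.
have cv := @nondecreasing_cvg_mu _ _ _ P F mF (bigcupT_measurable F mF) Fnd.
have E1 : (P : {measure set Omega -> \bar R}) [set w | (r < dist x (XN m w))%R]
   = lim ((P \o F) k @[k --> \oo]) by rewrite -UE (cvg_lim _ cv).
rewrite E1; apply: lime_le; first by apply/cvg_ex; eexists; exact: cv.
apply: nearW => k /=; apply: far_t.
  by rewrite ltrDl mulr_gt0.
have := hinv1 k; have := hinv k; move: rle h0; rewrite /h; set i := k.+1%:R^-1; nra.
Qed.

Lemma ee_below s : s < rr m -> ee s <= de `^ (1 - alpha) / m%:R.
Proof.
move=> hs.
have c0 : 0 <= de `^ (1 - alpha) / m%:R by rewrite divr_ge0 ?powR_ge0.
have [s0|s0] := leP s 0; first by rewrite ee_nonpos.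
have hMs := @rr_below m s s0 hs.
have rle : rr m <= rho / 2 := @rr_le rho m rho0 hM.
have srho : s < rho by move: hs rle rho0; lra.
have ha' := @key_a s de s0 de0 (Hl s (introT andP (conj s0 srho))).
apply: le_trans ha' _; apply: ler_wpM2l; first exact: powR_ge0.
by rewrite ltW.
Qed.

Lemma open_bound i :
  (\int[P]_w (\1_(ballo (rr m)) (Xs i w) * g (Xs i w))%:E
     <= (de `^ (1 - alpha) / m%:R)%:E)%E.
Proof.
apply: int_open; first exact: mX.
move=> s hs.
have -> : (\int[P]_w (\1_(cball dist x s) (Xs i w) * g (Xs i w))%:E)%E
   = locE P dist X eta x s.
  rewrite /locE; apply: (@int_ident _ _ _ _ _ P (Xs i) X (mX i) (mX 0)
     _ (fun y => \1_(cball dist x s) y * g y)).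
  - by move=> A mA; case: hiid => _ [hid _]; exact: hid.
  - by apply: mgi; exact: cball_meas.
  - by move=> y; exact: gi_ge0.
by rewrite locE_E lee_fin; exact: ee_below.
Qed.

Lemma main_bound :
  ((\int[P]_w (`|eta (XN m w) - eta x|)%:E)
   <= (de `^ (1 - alpha) + K * de `^ alpha)%:E +
      \int[P]_w ((\1_(sphere dist x (rr m)) (XN m w)) * `|eta (XN m w) - eta x|)%:E)%E.
Proof.
set r := rr m.
have mXN : measurable_fun setT (XN m) by case: hnn.
pose far := XN m @^-1` [set y | (r < dist x y)%R].
have mfar : measurable far.
  exact: (@mpre _ _ _ _ (XN m) mXN _ (@gt_dist_meas _ _ _ dist hd hm x _)).
pose fa := fun (i : 'I_m) w => (\1_(ballo r) (Xs i.+1 w) * g (Xs i.+1 w))%:E.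
pose fs := fun w => (\1_(sphere dist x r) (XN m w) * g (XN m w))%:E.
pose ff := fun w => (K * \1_far w)%:E.
have mfa i : measurable_fun setT (fa i).
  apply/measurable_EFinP; apply: mgiY; last exact: mX.
  exact: (@lt_dist_meas _ _ _ dist hd hm x r).
have mfs : measurable_fun setT fs.
  by apply/measurable_EFinP; apply: mgiY => //; exact: sphere_meas.
have mff : measurable_fun setT ff.
  apply/measurable_EFinP; apply: measurable_funM.
  - exact: measurable_cst.
  - exact: measurable_indic.
have fa0 i w : (0 <= fa i w)%E by rewrite lee_fin gi_ge0.
have fs0 w : (0 <= fs w)%E by rewrite lee_fin gi_ge0.
have ff0 w : (0 <= ff w)%E.
  by rewrite lee_fin; apply: mulr_ge0; [exact: K_ge0 | case/andP: (ind01g _ far w)].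
have sum0 w : (0 <= \sum_(i < m) fa i w)%E by apply: sume_ge0 => i _.
have msum : measurable_fun setT (fun w => \sum_(i < m) fa i w)%E.
  exact: emeasurable_sum.
have step1 : ((\int[P]_w (`|eta (XN m w) - eta x|)%:E)
   <= \int[P]_w (\sum_(i < m) fa i w + fs w + ff w))%E.
  apply: ge0_le_integral => //.
  - apply/measurable_EFinP; exact: (measurableT_comp mg mXN).
  - by apply: emeasurable_funD => //; exact: emeasurable_funD.
  move=> w _; rewrite /fa /fs /ff sumEFin -!EFinD lee_fin.
  exact: (@pw m r w m1).
apply: le_trans step1 _.
rewrite ge0_integralD //; last first.
  - by apply: emeasurable_funD.
  - by move=> w _; rewrite adde_ge0.
rewrite ge0_integralD //.
have h1 : (\int[P]_w (\sum_(i < m) fa i w) <= (de `^ (1 - alpha))%:E)%E.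
  rewrite ge0_integral_sum //.
  apply: (@le_trans _ _ (\sum_(i < m) (de `^ (1 - alpha) / m%:R)%:E)%E).
    apply: lee_sum => i _; exact: open_bound.
  rewrite sumEFin sumr_const card_ord lee_fin -mulrnAr -(mulr_natr (m%:R^-1)) mulVf ?mulr1 //.
  by rewrite pnatr_eq0 -lt0n.
have h3 : (\int[P]_w ff w <= (K * de `^ alpha)%:E)%E.
  rewrite /ff.
  under eq_integral do rewrite EFinM.
  rewrite ge0_integralZl //; last by rewrite lee_fin K_ge0.
  - rewrite integral_indic // setIT EFinM; apply: lee_wpmul2l; first by rewrite lee_fin K_ge0.
    exact: far_bound.
  - by apply/measurable_EFinP; exact: measurable_indic.
rewrite EFinD addeAC; apply: leeD; first exact: leeD.
exact: lexx.
Qed.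

End Bounds.

Lemma cvE (f : nat -> \bar R) : (forall m, f m = (fine (f m))%:E) ->
  (f m @[m --> \oo] --> 0%:E) <-> ((fun m => fine (f m)) @ \oo --> 0).
Proof.
move=> E; split; first by move/fine_cvgP => [].
move=> h; apply/fine_cvgP; split => //; apply: nearW => m; by rewrite E.
Qed.

Lemma final (hleb : lebesgue_point P dist X eta x) :
  ((fun m => (\int[P]_w (`|eta (XN m w) - eta x|)%:E)%E) @ \oo --> 0%E)
  <->
  ((fun m => (\int[P]_w
       ((\1_(sphere dist x (alpha_seq P dist X eta x alpha m)) (XN m w))
        * `|eta (XN m w) - eta x|)%:E)%E) @ \oo --> 0%E).
Proof.
have mXN m : measurable_fun setT (XN m) by case: hnn.
set u := fun m => _; set v := fun m => _.
have uE m : u m = (fine (u m))%:E.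
  rewrite /u; apply: (@int_fin _ _ _ P _ _ K).
  - exact: (measurableT_comp mg (mXN m)).
  - by move=> w; exact: g_ge0.
  - by move=> w; exact: hK.
have vE m : v m = (fine (v m))%:E.
  rewrite /v; apply: (@int_fin _ _ _ P _ _ K).
  - by apply: mgiY => //; exact: sphere_meas.
  - by move=> w; exact: gi_ge0.
  - by move=> w; exact: gi_leK.
have v0 m : 0 <= fine (v m).
  by apply: fine_ge0; apply: integral_ge0 => w _; rewrite lee_fin gi_ge0.
have vu m : fine (v m) <= fine (u m).
  rewrite -lee_fin -uE -vE /u /v; apply: ge0_le_integral => //.
  - by apply/measurable_EFinP; apply: mgiY => //; exact: sphere_meas.
  - exact/measurable_EFinP/(measurableT_comp mg (mXN m)).
  move=> w _; rewrite lee_fin -[X in _ <= X]mul1r; apply: ler_wpM2r; first exact: g_ge0.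
  by case/andP: (ind01 (sphere dist x (alpha_seq P dist X eta x alpha m)) (XN m w)).
split.
- move=> /(cvE _ uE) Hu; apply/(cvE _ vE); apply/cvgr0Pnorm_le => eps e0.
  move/cvgr0Pnorm_le : Hu => /(_ eps e0); apply: filterS => m.
  rewrite (ger0_norm (v0 m)) ger0_norm; last exact: le_trans (v0 m) (vu m).
  exact: le_trans (vu m).
- move=> /(cvE _ vE) Hv; apply/(cvE _ uE); apply/cvgr0Pnorm_le => eps e0.
  have e20 : 0 < eps / 2 by rewrite divr_gt0.
  have [de de0 hde] := @pick_de R alpha K (eps / 2) ha K_ge0 e20.
  have [rho rho0 Hrho] : exists2 rho, 0 < rho &
      forall t, 0 < t < rho -> ee t <= de * pp t.
    move/cvgr0Pnorm_le : hleb => /(_ de de0).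
    move=> [rho /= rho0 H]; exists rho => // t /andP[t0 trho].
    have := H t; rewrite /= sub0r normrN gtr0_norm // => /(_ trho t0).
    rewrite ger0_norm ?divr_ge0 ?ee_ge0 ?pp_ge0 //.
    by rewrite ler_pdivrMr ?pp_gt0 // mulrC.
  have MM0 : 0 < MM (rho / 2).
    by rewrite MME mulr_gt0 // powR_gt0 // ?ee_gt0 ?pp_gt0 // divr_gt0.
  have Hm : \forall m \near \oo, (1 <= m)%N /\ m%:R^-1 <= MM (rho / 2).
    apply: near_inftyS; have := near_infty_natSinv_lt (PosNum MM0).
    by apply: filterS => n hn; split => //; exact: ltW.
  move/cvgr0Pnorm_le : Hv => /(_ _ e20) Hv.
  near=> m.
  have [m1 hM] : (1 <= m)%N /\ m%:R^-1 <= MM (rho / 2) by near: m.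
  have hv : `|fine (v m)| <= eps / 2 by near: m.
  have := @main_bound de rho m de0 rho0 Hrho m1 hM.
  rewrite -/(u m) -/(v m) uE vE -EFinD lee_fin => hb.
  rewrite ger0_norm; last exact: le_trans (v0 m) (vu m).
  move: hv; rewrite ger0_norm // => hv.
  move: hb hde hv; set c := de `^ (1 - alpha) + K * de `^ alpha; lra.
Unshelve. all: by end_near.
Qed.

End Main.

Theorem mainTheorem6 (R : realType) (d : measure_display) (T : measurableType d)
  (dist : T -> T -> R)
  (dO : measure_display) (Omega : measurableType dO) (P : probability Omega R)
  (Xs : nat -> Omega -> T) (XN : nat -> Omega -> T)
  (eta : T -> R) (x : T) (alpha : R) :
  is_metric dist ->
  @measurable _ T = <<s metric_open dist >> ->
  iid_seq P Xs ->
  nearest_neighbors dist x Xs XN ->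
  measurable_fun setT eta ->
  (exists M : R, forall y, `|eta y| <= M) ->
  (forall r : R, 0 < r -> (0%:E < PXball P dist (Xs 0%N) x r)%E) ->
  P (Xs 0%N @^-1` [set x]) = 0%E ->
  (forall r : R, 0 < r -> (0%:E < locE P dist (Xs 0%N) eta x r)%E) ->
  0 < alpha < 1 ->
  lebesgue_point P dist (Xs 0%N) eta x ->
  ((fun m => (\int[P]_w (`|eta (XN m w) - eta x|)%:E)%E) @ \oo --> 0%E)
  <->
  ((fun m => (\int[P]_w
       ((\1_(sphere dist x (alpha_seq P dist (Xs 0%N) eta x alpha m)) (XN m w))
        * `|eta (XN m w) - eta x|)%:E)%E) @ \oo --> 0%E).
Proof.
move=> hd hm hiid hnn meta [M hM] hp _ he ha hleb.
have hK : forall y, `|eta y - eta x| <= M + M.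
  move=> y; apply: le_trans (ler_normB _ _) _; exact: lerD.
exact: (@final R d T dist dO Omega P Xs XN eta x alpha hd hm hiid hnn meta (M + M) hK hp he ha hleb).
Qed.
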